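(* Let $d\geq3$ and let $T$ be a set of three affinely independent points in $\mathbb{N}_0^d$. Then the $2$-completion $E_2^\infty(T)$ of $T$ equals $\Lambda(T)\cap\mathbb{N}_0^d$.
   Context: $\mathbb{N}_0=\{0,1,2,\dots\}$. For nonempty $\Gamma\subseteq\mathbb{N}_0^d$, $\Lambda(\Gamma)$ is the coset in $\mathbb{Z}^d$ generated by $\Gamma$ (smallest coset of a subgroup of $\mathbb{Z}^d$ containing $\Gamma$); each $\lambda\in\Lambda(\Gamma)$ can be written $\lambda=\gamma+\sum_{\alpha\in\Gamma,\alpha\neq\gamma}m_{\gamma,\alpha}(\alpha-\gamma)$ with $\gamma\in\Gamma$ and integers $m_{\gamma,\alpha}$, finitely many nonzero. $d(\Gamma,\lambda)$ is the infimum over all such representations of $\max\big(\sum_{m_{\gamma,\alpha}>0}m_{\gamma,\alpha},-\sum_{m_{\gamma,\alpha}<0}m_{\gamma,\alpha}\big)$, and $E_n(\Gamma)=\{\lambda\in\Lambda(\Gamma)\cap\mathbb{N}_0^d:d(\Gamma,\lambda)\leq n\}$. Set $E_n^1(T)=E_n(T)$, $E_n^{k+1}(T)=E_n(E_n^k(T))$, and the $n$-completion $E_n^\infty(T)=\bigcup_{k\geq1}E_n^k(T)$. *)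

(* Defs.v *)
From HB Require Import structures.
From mathcomp Require Import all_boot all_order all_algebra.
Set Implicit Arguments. Unset Strict Implicit. Unset Printing Implicit Defensive.
Import Order.TTheory GRing.Theory Num.Theory.
Local Open Scope ring_scope.

Definition pt (d : nat) := 'rV[int]_d.

Definition nonneg d (x : pt d) : Prop := forall i : 'I_d, 0 <= x 0 i.

Definition is_subgroup d (H : pt d -> Prop) : Prop :=
  H 0 /\ (forall x y, H x -> H y -> H (x - y)).

(* Lambda(G): the smallest coset c + H of a subgroup H of Z^d containing G *)
Definition Lambda d (G : pt d -> Prop) (l : pt d) : Prop :=
  forall (H : pt d -> Prop) (c : pt d),
    is_subgroup H -> (forall g, G g -> H (g - c)) -> H (l - c).

(* d(G, l) <= n : there is a representation
   l = g + sum_{alpha in G, alpha <> g} m_alpha (alpha - g)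
   (finitely many nonzero m_alpha, encoded as a list of pairs with distinct
   first components) whose positive part and negative part both are <= n.
   Since d(G,l) is an infimum of natural numbers, "d(G,l) <= n" is exactly
   the existence of such a representation. *)
Definition dist_le d (G : pt d -> Prop) (l : pt d) (n : nat) : Prop :=
  exists (g : pt d) (s : seq (pt d * int)),
    [/\ G g /\ uniq (map fst s),
        (forall p, p \in s -> G p.1 /\ p.1 <> g),
        l = g + \sum_(p <- s) (p.1 - g) *~ p.2,
        \sum_(p <- s) (if 0 < p.2 then p.2 else 0) <= n%:Z
      & \sum_(p <- s) (if p.2 < 0 then - p.2 else 0) <= n%:Z].

Definition En d (n : nat) (G : pt d -> Prop) (l : pt d) : Prop :=
  Lambda G l /\ nonneg l /\ dist_le G l n.

(* Eiter n k G = E_n^{k+1}(G) *)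
Fixpoint Eiter d (n k : nat) (G : pt d -> Prop) : pt d -> Prop :=
  match k with
  | 0 => En n G
  | k'.+1 => En n (Eiter n k' G)
  end.

Definition Einf d (n : nat) (G : pt d -> Prop) (l : pt d) : Prop :=
  exists k, Eiter n k G l.

(* affine independence of three points (over Q, equivalently over R) *)
Definition toQ d (x : pt d) : 'rV[rat]_d := map_mx (fun z : int => z%:~R) x.

Definition aff_indep3 d (a b c : pt d) : Prop :=
  forall p q : rat, p *: (toQ b - toQ a) + q *: (toQ c - toQ a) = 0 -> p = 0 /\ q = 0.

(* Main.v *)
Require Import Defs.
From mathcomp Require Import all_boot all_order all_algebra.
From mathcomp Require Import zify ring lra.
Set Implicit Arguments. Unset Strict Implicit. Unset Printing Implicit Defensive.
Import Order.TTheory GRing.Theory Num.Theory.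
Local Open Scope ring_scope.

Lemma mulz_entry d (M : pt d) (n : int) i : (M *~ n) 0 i = M 0 i * n.
Proof. by rewrite -scaler_int mxE intz mulrC. Qed.

Lemma sg_opp d (H : pt d -> Prop) x : is_subgroup H -> H x -> H (- x).
Proof. move=> [H0 HB] Hx. by have := HB _ _ H0 Hx; rewrite sub0r. Qed.

Lemma sg_add d (H : pt d -> Prop) x y : is_subgroup H -> H x -> H y -> H (x + y).
Proof. move=> sH Hx Hy. by have := sH.2 _ _ Hx (sg_opp sH Hy); rewrite opprK. Qed.

Lemma sg_muln d (H : pt d -> Prop) x n : is_subgroup H -> H x -> H (x *+ n).
Proof.
move=> sH Hx; elim: n => [|n IH]; first by rewrite mulr0n; exact: sH.1.
by rewrite mulrS; apply: sg_add.
Qed.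

Lemma sg_mulz d (H : pt d -> Prop) x z : is_subgroup H -> H x -> H (x *~ z).
Proof.
move=> sH Hx; case: z => n; first exact: sg_muln.
by rewrite NegzE mulrNz; apply: sg_opp => //; apply: sg_muln.
Qed.

Lemma sg_sum d (H : pt d -> Prop) (s : seq (pt d * int)) F : is_subgroup H ->
  (forall p, p \in s -> H (F p)) -> H (\sum_(p <- s) F p).
Proof.
move=> sH; elim: s => [|p s IH] Hs; first by rewrite big_nil; exact: sH.1.
rewrite big_cons; apply: sg_add => //; first by apply: Hs; rewrite inE eqxx.
by apply: IH => q qs; apply: Hs; rewrite inE qs orbT.
Qed.

Lemma dist_Lambda d (G : pt d -> Prop) l n : dist_le G l n -> Lambda G l.
Proof.
move=> [g [s [[Gg _] Hs -> _ _]]] H c sH HG.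
have -> : g + \sum_(p <- s) (p.1 - g) *~ p.2 - c =
          (g - c) + \sum_(p <- s) ((p.1 - c) - (g - c)) *~ p.2.
  rewrite addrAC; congr (_ + _); apply: eq_bigr => p _.
  by rewrite opprB addrA subrK.
apply: sg_add => //; first exact: HG.
apply: sg_sum => // p ps; apply: sg_mulz => //; apply: sH.2; apply: HG => //.
exact: (Hs p ps).1.
Qed.

Lemma Lambda_trans d (G G' : pt d -> Prop) l :
  (forall g, G' g -> Lambda G g) -> Lambda G' l -> Lambda G l.
Proof. move=> HG' HL H c sH HG; apply: HL => // g G'g; exact: HG' g G'g H c sH HG. Qed.

Lemma En_self d n (G : pt d -> Prop) x : G x -> nonneg x -> En n G x.
Proof.
move=> Gx nx; split; [|split => //].
  by move=> H c sH HG; apply: HG.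
exists x, [::]; split => //; by rewrite ?big_nil ?addr0.
Qed.

Lemma En_step d n (G : pt d -> Prop) x : dist_le G x n -> nonneg x -> En n G x.
Proof. move=> dx nx; split; [exact: dist_Lambda dx | by split]. Qed.

Lemma Eiter_nonneg d n k (G : pt d -> Prop) x : Eiter n k G x -> nonneg x.
Proof. by case: k => [|k] [_ [Hn _]]. Qed.

Lemma Eiter_succ d n k (G : pt d -> Prop) x : Eiter n k G x -> Eiter n k.+1 G x.
Proof. move=> h; apply: En_self => //; exact: Eiter_nonneg h. Qed.

Lemma Eiter_Lambda d n k (G : pt d -> Prop) x : Eiter n k G x -> Lambda G x.
Proof.
elim: k x => [|k IH] x; first by move=> [].
move=> [hL _]; apply: Lambda_trans hL; exact: IH.
Qed.

Lemma mv1 d (G : pt d -> Prop) x g : G x -> G g -> x <> g ->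
  dist_le G (g + (x - g) *~ 2) 2.
Proof.
move=> Gx Gg nxg; exists g, [:: (x, 2)]; split.
- by split.
- by move=> p; rewrite inE => /eqP ->.
- by rewrite big_cons big_nil addr0.
- by rewrite big_cons big_nil.
- by rewrite big_cons big_nil.
Qed.

Lemma mv2 d (G : pt d -> Prop) x y g (m : int) : G x -> G y -> G g -> x <> y -> x <> g -> y <> g ->
  (m = 1 \/ m = -1) ->
  dist_le G (g + (x - g) *~ m + (y - g) *~ m) 2.
Proof.
move=> Gx Gy Gg nxy nxg nyg hm; exists g, [:: (x, m); (y, m)]; split.
- split => //=; rewrite inE andbT; apply/eqP; exact: nxy.
- by move=> p; rewrite !inE => /orP [/eqP -> | /eqP ->].
- by rewrite !big_cons big_nil addr0 addrA.
- by rewrite !big_cons big_nil; case: hm => ->.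
- by rewrite !big_cons big_nil; case: hm => ->.
Qed.
Definition Pt d (a b c : pt d) (p : int * int) : pt d := a + (b - a) *~ p.1 + (c - a) *~ p.2.

Lemma Pt_entry d (a b c : pt d) p i :
  Pt a b c p 0 i = a 0 i + (b 0 i - a 0 i) * p.1 + (c 0 i - a 0 i) * p.2.
Proof. by rewrite /Pt !mxE !mulz_entry !mxE. Qed.

Lemma Pt_aff d (a b c : pt d) (r z x y : int * int) (m n : int) :
  r.1 = z.1 + m * (x.1 - z.1) + n * (y.1 - z.1) ->
  r.2 = z.2 + m * (x.2 - z.2) + n * (y.2 - z.2) ->
  Pt a b c r = Pt a b c z + (Pt a b c x - Pt a b c z) *~ m + (Pt a b c y - Pt a b c z) *~ n.
Proof.
move=> h1 h2; apply/rowP => i.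
rewrite /Pt !(mxE, mulz_entry) h1 h2; ring.
Qed.

Lemma Pt_inj d (a b c : pt d) p p' : aff_indep3 a b c -> Pt a b c p = Pt a b c p' -> p = p'.
Proof.
move=> hind E.
have key : (p.1 - p'.1)%:~R *: (toQ b - toQ a) + (p.2 - p'.2)%:~R *: (toQ c - toQ a) = 0 :> 'rV[rat]_d.
  apply/rowP => i.
  have := congr1 (fun M : pt d => M 0 i) E; rewrite /= !Pt_entry => Ei.
  rewrite !mxE.
  have Z : (p.1 - p'.1) * (b 0 i - a 0 i) + (p.2 - p'.2) * (c 0 i - a 0 i) = 0.
    have -> : (p.1 - p'.1) * (b 0 i - a 0 i) + (p.2 - p'.2) * (c 0 i - a 0 i) =
      (a 0 i + (b 0 i - a 0 i) * p.1 + (c 0 i - a 0 i) * p.2) -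
      (a 0 i + (b 0 i - a 0 i) * p'.1 + (c 0 i - a 0 i) * p'.2) by ring.
    by rewrite Ei subrr.
  by rewrite -!intrB -!intrM -intrD Z.
have [h1 h2] := hind _ _ key.
move/eqP: h1; rewrite intr_eq0 subr_eq0 => /eqP h1.
move/eqP: h2; rewrite intr_eq0 subr_eq0 => /eqP h2.
by case: p p' h1 h2 {E key} => ? ? [? ?] /= -> ->.
Qed.

Definition D (p1 p2 p3 : int * int) : int :=
  (p1.1 - p3.1) * (p2.2 - p3.2) - (p1.2 - p3.2) * (p2.1 - p3.1).

Lemma D_neq p1 p2 p3 : D p1 p2 p3 != 0 -> [/\ p1 <> p2, p1 <> p3 & p2 <> p3].
Proof.
move=> hD; split => E; move: hD; rewrite E /D; apply/negP; rewrite negbK; apply/eqP; ring.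
Qed.

Definition good d (a b c : pt d) q := nonneg (Pt a b c q).

Lemma good_comb d (a b c : pt d) q p1 p2 p3 r (K wq w1 w2 w3 : int) :
  good a b c q -> good a b c p1 -> good a b c p2 -> good a b c p3 ->
  0 < K -> 0 <= wq -> 0 <= w1 -> 0 <= w2 -> 0 <= w3 -> K = wq + w1 + w2 + w3 ->
  K * r.1 = wq * q.1 + w1 * p1.1 + w2 * p2.1 + w3 * p3.1 ->
  K * r.2 = wq * q.2 + w1 * p1.2 + w2 * p2.2 + w3 * p3.2 ->
  good a b c r.
Proof.
move=> gq g1 g2 g3 hK hq h1 h2 h3 hs e1 e2 i.
have := gq i; have := g1 i; have := g2 i; have := g3 i.
rewrite !Pt_entry.
set A := a 0 i; set B := b 0 i - A; set C := c 0 i - A.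
move=> f3 f2 f1 fq.
have E : K * (A + B * r.1 + C * r.2) =
  wq * (A + B * q.1 + C * q.2) + w1 * (A + B * p1.1 + C * p1.2)
  + w2 * (A + B * p2.1 + C * p2.2) + w3 * (A + B * p3.1 + C * p3.2).
  transitivity (A * K + B * (K * r.1) + C * (K * r.2)); first ring.
  rewrite e1 e2 hs; ring.
rewrite -(pmulr_rge0 _ hK) E.
by rewrite !addr_ge0 // mulr_ge0.
Qed.
Definition TT d (a b c : pt d) := fun x : pt d => x = a \/ x = b \/ x = c.

Definition Inv d (a b c : pt d) k (q p1 p2 p3 : int * int) (l1 l2 l3 : int) : Prop :=
  [/\ l1 + l2 + l3 = 1,
      q.1 = l1 * p1.1 + l2 * p2.1 + l3 * p3.1,
      q.2 = l1 * p1.2 + l2 * p2.2 + l3 * p3.2,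
      D p1 p2 p3 != 0 &
      [/\ Eiter 2 k (TT a b c) (Pt a b c p1), Eiter 2 k (TT a b c) (Pt a b c p2),
          Eiter 2 k (TT a b c) (Pt a b c p3) & good a b c q]].

Definition meas (l1 l2 l3 : int) : nat := (absz l1 + absz l2 + absz l3)%N.

Lemma swap12 d (a b c : pt d) k q p1 p2 p3 l1 l2 l3 :
  Inv a b c k q p1 p2 p3 l1 l2 l3 -> Inv a b c k q p2 p1 p3 l2 l1 l3.
Proof.
case=> hs h1 h2 hD [e1 e2 e3 g]; split => //.
- lia.
- rewrite h1; ring.
- rewrite h2; ring.
- by rewrite (_ : D p2 p1 p3 = - D p1 p2 p3) ?oppr_eq0 // /D; ring.
Qed.

Lemma swap13 d (a b c : pt d) k q p1 p2 p3 l1 l2 l3 :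
  Inv a b c k q p1 p2 p3 l1 l2 l3 -> Inv a b c k q p3 p2 p1 l3 l2 l1.
Proof.
case=> hs h1 h2 hD [e1 e2 e3 g]; split => //.
- lia.
- rewrite h1; ring.
- rewrite h2; ring.
- by rewrite (_ : D p3 p2 p1 = - D p1 p2 p3) ?oppr_eq0 // /D; ring.
Qed.

Lemma swap23 d (a b c : pt d) k q p1 p2 p3 l1 l2 l3 :
  Inv a b c k q p1 p2 p3 l1 l2 l3 -> Inv a b c k q p1 p3 p2 l1 l3 l2.
Proof.
case=> hs h1 h2 hD [e1 e2 e3 g]; split => //.
- lia.
- rewrite h1; ring.
- rewrite h2; ring.
- by rewrite (_ : D p1 p3 p2 = - D p1 p2 p3) ?oppr_eq0 // /D; ring.
Qed.

Lemma Pt_neq d (a b c : pt d) p p' : aff_indep3 a b c -> p <> p' -> Pt a b c p <> Pt a b c p'.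
Proof. by move=> hind ne E; apply: ne; exact: Pt_inj E. Qed.

Lemma ruleA d (a b c : pt d) k q p1 p2 p3 l1 l2 l3 : aff_indep3 a b c ->
  Inv a b c k q p1 p2 p3 l1 l2 l3 -> l3 < 0 -> 1 <= l1 -> 1 <= l2 ->
  Inv a b c k.+1 q p1 p2 (p1.1 + p2.1 - p3.1, p1.2 + p2.2 - p3.2) (l1 + l3) (l2 + l3) (- l3).
Proof.
move=> hind [hs h1 h2 hD [e1 e2 e3 g]] hl3 hl1 hl2.
have [n12 n13 n23] := D_neq hD.
have El3 : l3 = 1 - l1 - l2 by lia.
have g1 : good a b c p1 := Eiter_nonneg e1.
have g2 : good a b c p2 := Eiter_nonneg e2.
have g3 : good a b c p3 := Eiter_nonneg e3.
set r := (_, _).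
have gr : good a b c r.
  apply: (good_comb (q := q) (p1 := p1) (p2 := p2) (p3 := p3) (K := l1 + l2 - 1)
     (wq := 1) (w1 := l2 - 1) (w2 := l1 - 1) (w3 := 0)) => //; try lia.
  - by rewrite /= h1 El3; ring.
  - by rewrite /= h2 El3; ring.
split.
- lia.
- rewrite h1 /=; ring.
- rewrite h2 /=; ring.
- by rewrite (_ : D p1 p2 r = - D p1 p2 p3) ?oppr_eq0 // /D /=; ring.
split; [exact: Eiter_succ | exact: Eiter_succ | | exact: g].
apply: En_step gr.
rewrite (@Pt_aff _ a b c r p3 p1 p2 1 1) /=; [|ring|ring].
by apply: mv2 => //; [exact: Pt_neq | exact: Pt_neq | exact: Pt_neq | left].
Qed.

Lemma ruleB d (a b c : pt d) k q p1 p2 p3 l1 l2 l3 : aff_indep3 a b c ->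
  Inv a b c k q p1 p2 p3 l1 l2 l3 -> l3 < 0 -> l2 = 0 ->
  Inv a b c k.+1 q p1 p2 (2 * p1.1 - p3.1, 2 * p1.2 - p3.2) (l1 + 2 * l3) l2 (- l3).
Proof.
move=> hind [hs h1 h2 hD [e1 e2 e3 g]] hl3 hl2.
have [n12 n13 n23] := D_neq hD.
have El1 : l1 = 1 - l3 by lia.
have g1 : good a b c p1 := Eiter_nonneg e1.
have g2 : good a b c p2 := Eiter_nonneg e2.
have g3 : good a b c p3 := Eiter_nonneg e3.
set r := (_, _).
have gr : good a b c r.
  apply: (good_comb (q := q) (p1 := p1) (p2 := p2) (p3 := p3) (K := l1)
     (wq := 2) (w1 := 0) (w2 := 0) (w3 := l1 - 2)) => //; try lia.
  - by rewrite /= h1 El1 hl2; ring.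
  - by rewrite /= h2 El1 hl2; ring.
split.
- lia.
- rewrite h1 /=; ring.
- rewrite h2 /=; ring.
- by rewrite (_ : D p1 p2 r = - D p1 p2 p3) ?oppr_eq0 // /D /=; ring.
split; [exact: Eiter_succ | exact: Eiter_succ | | exact: g].
apply: En_step gr.
rewrite (@Pt_aff _ a b c r p3 p1 p1 2 0) /=; [|ring|ring].
rewrite mulr0z addr0.
by apply: mv1 => //; exact: Pt_neq.
Qed.

Lemma ruleC d (a b c : pt d) k q p1 p2 p3 l1 l2 l3 : aff_indep3 a b c ->
  Inv a b c k q p1 p2 p3 l1 l2 l3 -> l1 < l2 -> l2 < 0 ->
  Inv a b c k.+1 q (2 * p3.1 - p1.1, 2 * p3.2 - p1.2) p2 p3 (- l1) l2 (l3 + 2 * l1).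
Proof.
move=> hind [hs h1 h2 hD [e1 e2 e3 g]] hl12 hl2.
have [n12 n13 n23] := D_neq hD.
have El3 : l3 = 1 - l1 - l2 by lia.
have g1 : good a b c p1 := Eiter_nonneg e1.
have g2 : good a b c p2 := Eiter_nonneg e2.
have g3 : good a b c p3 := Eiter_nonneg e3.
set r := (_, _).
have gr : good a b c r.
  apply: (good_comb (q := q) (p1 := p1) (p2 := p2) (p3 := p3) (K := - l1)
     (wq := 1) (w1 := 0) (w2 := - l2) (w3 := - l1 - 1 + l2)) => //; try lia.
  - by rewrite /= h1 El3; ring.
  - by rewrite /= h2 El3; ring.
split.
- lia.
- rewrite h1 /=; ring.
- rewrite h2 /=; ring.
- by rewrite (_ : D r p2 p3 = - D p1 p2 p3) ?oppr_eq0 // /D /=; ring.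
split; [ | exact: Eiter_succ | exact: Eiter_succ | exact: g].
apply: En_step gr.
rewrite (@Pt_aff _ a b c r p1 p3 p3 2 0) /=; [|ring|ring].
rewrite mulr0z addr0.
by apply: mv1 => //; apply: Pt_neq => // E; apply: n13.
Qed.

Lemma ruleD d (a b c : pt d) k q p1 p2 p3 l1 l2 l3 : aff_indep3 a b c ->
  Inv a b c k q p1 p2 p3 l1 l2 l3 -> l1 = l2 -> l1 < 0 ->
  Inv a b c k.+1 q p1 (3 * p3.1 - p1.1 - p2.1, 3 * p3.2 - p1.2 - p2.2) p3 0 (- l1) (1 + l1).
Proof.
move=> hind [hs h1 h2 hD [e1 e2 e3 g]] hl12 hl1.
have [n12 n13 n23] := D_neq hD.
have El3 : l3 = 1 - l1 - l2 by lia.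
have g1 : good a b c p1 := Eiter_nonneg e1.
have g2 : good a b c p2 := Eiter_nonneg e2.
have g3 : good a b c p3 := Eiter_nonneg e3.
set r := (_, _).
have gr : good a b c r.
  apply: (good_comb (q := q) (p1 := p1) (p2 := p2) (p3 := p3) (K := - l1)
     (wq := 1) (w1 := 0) (w2 := 0) (w3 := - 1 - l1)) => //; try lia.
  - by rewrite /= h1 El3 -hl12; ring.
  - by rewrite /= h2 El3 -hl12; ring.
split.
- lia.
- rewrite h1 /= El3 -hl12; ring.
- rewrite h2 /= El3 -hl12; ring.
- by rewrite (_ : D p1 r p3 = - D p1 p2 p3) ?oppr_eq0 // /D /=; ring.
split; [exact: Eiter_succ | | exact: Eiter_succ | exact: g].
apply: En_step gr.
rewrite (@Pt_aff _ a b c r p3 p1 p2 (-1) (-1)) /=; [|ring|ring].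
by apply: mv2 => //; [exact: Pt_neq | exact: Pt_neq | exact: Pt_neq | right].
Qed.

Definition Next d (a b c : pt d) k q m := exists p1 p2 p3 l1 l2 l3,
  Inv a b c k.+1 q p1 p2 p3 l1 l2 l3 /\ (meas l1 l2 l3 < m)%N.

Lemma step3 d (a b c : pt d) k q p1 p2 p3 l1 l2 l3 : aff_indep3 a b c ->
  Inv a b c k q p1 p2 p3 l1 l2 l3 -> l3 < 0 -> 0 <= l1 -> 0 <= l2 ->
  Next a b c k q (meas l1 l2 l3).
Proof.
move=> hind hI hl3 hl1 hl2; have [hs _ _ _ _] := hI.
have [[h1 h2]|[h|h]] : (1 <= l1 /\ 1 <= l2) \/ (l2 = 0 \/ l1 = 0) by lia.
- do 6 eexists; split; first exact: ruleA hind hI hl3 h1 h2.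
  rewrite /meas; lia.
- do 6 eexists; split; first exact: ruleB hind hI hl3 h.
  rewrite /meas; lia.
- do 6 eexists; split; first exact: ruleB hind (swap12 hI) hl3 h.
  rewrite /meas; lia.
Qed.

Lemma step12 d (a b c : pt d) k q p1 p2 p3 l1 l2 l3 : aff_indep3 a b c ->
  Inv a b c k q p1 p2 p3 l1 l2 l3 -> l1 < 0 -> l2 < 0 ->
  Next a b c k q (meas l1 l2 l3).
Proof.
move=> hind hI hl1 hl2; have [hs _ _ _ _] := hI.
have [h|[h|h]] : l1 < l2 \/ l1 = l2 \/ l2 < l1 by lia.
- do 6 eexists; split; first exact: ruleC hind hI h hl2.
  rewrite /meas; lia.
- do 6 eexists; split; first exact: ruleD hind hI h hl1.
  rewrite /meas; lia.
- do 6 eexists; split; first exact: ruleC hind (swap12 hI) h hl1.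
  rewrite /meas; lia.
Qed.

Lemma step d (a b c : pt d) k q p1 p2 p3 l1 l2 l3 : aff_indep3 a b c ->
  Inv a b c k q p1 p2 p3 l1 l2 l3 -> ~ (0 <= l1 /\ 0 <= l2 /\ 0 <= l3) ->
  Next a b c k q (meas l1 l2 l3).
Proof.
move=> hind hI hneg; have [hs _ _ _ _] := hI.
have E12 : meas l1 l2 l3 = meas l2 l1 l3 by rewrite /meas; lia.
have E13 : meas l1 l2 l3 = meas l3 l2 l1 by rewrite /meas; lia.
have E23 : meas l1 l2 l3 = meas l1 l3 l2 by rewrite /meas; lia.
have : (l1 < 0 /\ l2 < 0) \/ (l1 < 0 /\ l3 < 0) \/ (l2 < 0 /\ l3 < 0) \/
         (l3 < 0 /\ 0 <= l1 /\ 0 <= l2) \/ (l1 < 0 /\ 0 <= l3 /\ 0 <= l2) \/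
          (l2 < 0 /\ 0 <= l1 /\ 0 <= l3) by lia.
case=> [[h1 h2]|[[h1 h2]|[[h1 h2]|[[h1 [h2 h3]]|[[h1 [h2 h3]]|[h1 [h2 h3]]]]]]].
- exact: step12 hind hI h1 h2.
- rewrite E23; exact: step12 hind (swap23 hI) h1 h2.
- rewrite E13; exact: step12 hind (swap13 hI) h2 h1.
- exact: step3 hind hI h1 h2 h3.
- rewrite E13; exact: step3 hind (swap13 hI) h1 h2 h3.
- rewrite E23; exact: step3 hind (swap23 hI) h1 h2 h3.
Qed.

Lemma main d (a b c : pt d) (hind : aff_indep3 a b c) n : forall k q p1 p2 p3 l1 l2 l3,
  (meas l1 l2 l3 <= n)%N -> Inv a b c k q p1 p2 p3 l1 l2 l3 ->
  exists k', Eiter 2 k' (TT a b c) (Pt a b c q).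
Proof.
elim: n => [|n IH] k q p1 p2 p3 l1 l2 l3 hm hI; have [hs h1 h2 _ [e1 e2 e3 _]] := hI.
  by exfalso; move: hm; rewrite /meas; lia.
have [hpos|hneg] : (0 <= l1 /\ 0 <= l2 /\ 0 <= l3) \/ ~ (0 <= l1 /\ 0 <= l2 /\ 0 <= l3) by lia.
- have : (l1 = 1 /\ l2 = 0 /\ l3 = 0) \/ (l1 = 0 /\ l2 = 1 /\ l3 = 0) \/
             (l1 = 0 /\ l2 = 0 /\ l3 = 1) by lia.
  case=> [[L1 [L2 L3]]|[[L1 [L2 L3]]|[L1 [L2 L3]]]]; move: h1 h2;
    rewrite L1 L2 L3 !mul1r !mul0r ?addr0 ?add0r => h1 h2.
  + exists k; have -> : q = p1 by case: q h1 h2 {hI} => ? ? /= -> ->; case: p1 {e1}.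
    exact: e1.
  + exists k; have -> : q = p2 by case: q h1 h2 {hI} => ? ? /= -> ->; case: p2 {e2}.
    exact: e2.
  + exists k; have -> : q = p3 by case: q h1 h2 {hI} => ? ? /= -> ->; case: p3 {e3}.
    exact: e3.
- have [p1' [p2' [p3' [l1' [l2' [l3' [hI' hm']]]]]]] := step hind hI hneg.
  apply: (IH k.+1 q p1' p2' p3' l1' l2' l3') => //.
  by move: hm hm'; lia.
Qed.

Lemma Lambda_coords d (a b c : pt d) l : Lambda (TT a b c) l ->
  exists x y : int, l = Pt a b c (x, y).
Proof.
move=> hL.
pose H := fun z : pt d => exists x y : int, z = (b - a) *~ x + (c - a) *~ y.
have sH : is_subgroup H.
  split; first by exists 0, 0; rewrite !mulr0z addr0.
  move=> z1 z2 [x1 [y1 ->]] [x2 [y2 ->]]; exists (x1 - x2), (y1 - y2).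
  by rewrite !mulrzBr opprD addrACA.
have HG : forall g, TT a b c g -> H (g - a).
  move=> g [->|[->|->]].
  - by exists 0, 0; rewrite subrr !mulr0z addr0.
  - by exists 1, 0; rewrite mulr1z mulr0z addr0.
  - by exists 0, 1; rewrite mulr1z mulr0z add0r.
have [x [y E]] := hL H a sH HG.
by exists x, y; rewrite /Pt /= -addrA -E addrC subrK.
Qed.

Close Scope ring_scope.

Theorem lemma3p4 (d : nat) (a b c : pt d) :
  (3 <= d)%N ->
  nonneg a -> nonneg b -> nonneg c ->
  aff_indep3 a b c ->
  forall l : pt d,
    Einf 2 (fun x => x = a \/ x = b \/ x = c) l <->
    (Lambda (fun x => x = a \/ x = b \/ x = c) l /\ nonneg l).
Proof.
move=> _ na nb nc hind l; split.
- move=> [k hk]; split; [exact: Eiter_Lambda hk | exact: Eiter_nonneg hk].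
- move=> [hL hn].
  have [x [y El]] := Lambda_coords hL.
  have Pb : Pt a b c (1, 0)%R = b by rewrite /Pt /= mulr1z mulr0z addr0 addrC subrK.
  have Pc : Pt a b c (0, 1)%R = c by rewrite /Pt /= mulr1z mulr0z addr0 addrC subrK.
  have Pa : Pt a b c (0, 0)%R = a by rewrite /Pt /= !mulr0z !addr0.
  have hI : Inv a b c 0 (x, y) (1, 0)%R (0, 1)%R (0, 0)%R x y (1 - x - y)%R.
    split => /=.
    - ring.
    - ring.
    - ring.
    - by rewrite /D.
    - split.
      + rewrite Pb; apply: En_self => //; by right; left.
      + rewrite Pc; apply: En_self => //; by right; right.
      + rewrite Pa; apply: En_self => //; by left.
      + by rewrite /good -El.
  have [k hk] := main hind (leqnn _) hI.
  by exists k; rewrite El.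
Qed.
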